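(* Let $N$ be a near-ring. Then a subset $P\subseteq N$ is an equivalence class of some congruence on $N$ if and only if $P$ is a paragon in $\mathrm{T}(N)$.
   Context: A near-ring is $(N,+,\cdot)$ with $(N,+)$ a group, $\cdot$ associative, and $n(m+m')=nm+nm'$. A congruence on $N$ is an equivalence relation compatible with $+$ and $\cdot$. $\mathrm{T}(N)$ is the set $N$ with ternary operation $[a,b,c]=a-b+c$ and the multiplication of $N$. A heap is a set with a ternary operation satisfying $[a_1,a_2,[a_3,a_4,a_5]]=[[a_1,a_2,a_3],a_4,a_5]$ and $[a,a,b]=b=[b,a,a]$. A normal sub-heap is a non-empty subset $S$ closed under $[-,-,-]$ with $[[a,e,s],a,e]\in S$ for all $a$ and $e,s\in S$; $a\sim_S b$ iff $[a,b,s]\in S$ for some (equivalently all) $s\in S$. A sub-heap $S$ is closed if $[ts',ts,s]\in S$ and $[s't,st,s]\in S$ for all $s,s'\in S$, $t$. A paragon is a non-empty normal sub-heap $P$ all of whose $\sim_P$-classes are closed sub-heaps. *)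

(* Defs.v *)
Record nearRing := NearRing {
  carrier :> Type;
  nr_add : carrier -> carrier -> carrier;
  nr_opp : carrier -> carrier;
  nr_zero : carrier;
  nr_mul : carrier -> carrier -> carrier;
  nr_addA : forall a b c, nr_add a (nr_add b c) = nr_add (nr_add a b) c;
  nr_add0r : forall a, nr_add nr_zero a = a;
  nr_addr0 : forall a, nr_add a nr_zero = a;
  nr_addNr : forall a, nr_add (nr_opp a) a = nr_zero;
  nr_addrN : forall a, nr_add a (nr_opp a) = nr_zero;
  nr_mulA : forall a b c, nr_mul a (nr_mul b c) = nr_mul (nr_mul a b) c;
  nr_mulDr : forall n m m', nr_mul n (nr_add m m') = nr_add (nr_mul n m) (nr_mul n m')
}.

Set Implicit Arguments.
Section TN.
Variable N : nearRing.

Definition congruence (R : N -> N -> Prop) : Prop :=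
  (forall a, R a a) /\
  (forall a b, R a b -> R b a) /\
  (forall a b c, R a b -> R b c -> R a c) /\
  (forall a b c d, R a b -> R c d -> R (nr_add N a c) (nr_add N b d)) /\
  (forall a b c d, R a b -> R c d -> R (nr_mul N a c) (nr_mul N b d)).

Definition is_class_of (R : N -> N -> Prop) (P : N -> Prop) : Prop :=
  exists a : N, forall x, P x <-> R a x.

(* The truss T(N): ternary heap operation [a,b,c] = a - b + c,
   multiplication that of N. *)
Definition tern (a b c : N) : N := nr_add N (nr_add N a (nr_opp N b)) c.

Definition sub_heap (S : N -> Prop) : Prop :=
  forall a b c, S a -> S b -> S c -> S (tern a b c).

Definition normal_sub_heap (S : N -> Prop) : Prop :=
  (exists s, S s) /\ sub_heap S /\
  (forall a e s, S e -> S s -> S (tern (tern a e s) a e)).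

Definition heap_rel (S : N -> Prop) (a b : N) : Prop :=
  exists s, S s /\ S (tern a b s).

Definition closed_sub_heap (S : N -> Prop) : Prop :=
  sub_heap S /\
  (forall s s' t, S s -> S s' ->
     S (tern (nr_mul N t s') (nr_mul N t s) s) /\
     S (tern (nr_mul N s' t) (nr_mul N s t) s)).

Definition paragon (P : N -> Prop) : Prop :=
  (exists p, P p) /\ normal_sub_heap P /\
  (forall a : N, closed_sub_heap (fun b => heap_rel P a b)).

End TN.
Arguments congruence {N} R.
Arguments is_class_of {N} R P.
Arguments paragon {N} P.
Arguments tern {N} a b c.
Arguments sub_heap {N} S.
Arguments normal_sub_heap {N} S.
Arguments heap_rel {N} S a b.
Arguments closed_sub_heap {N} S.

(* Main.v *)
Require Import Defs.
From Stdlib Require Import Setoid.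

Section G.
Variable N : nearRing.
Local Notation "a + b" := (nr_add N a b).
Local Notation "- a" := (nr_opp N a).
Local Notation "a * b" := (nr_mul N a b).
Local Notation "0" := (nr_zero N).

Lemma addA' (a b c : N) : (a + b) + c = a + (b + c).
Proof. symmetry; apply nr_addA. Qed.
Lemma addKl (a b : N) : a + (- a + b) = b.
Proof. rewrite nr_addA, nr_addrN, nr_add0r; reflexivity. Qed.
Lemma addNKl (a b : N) : - a + (a + b) = b.
Proof. rewrite nr_addA, nr_addNr, nr_add0r; reflexivity. Qed.
Lemma oppK (a : N) : - - a = a.
Proof. rewrite <- (nr_addr0 N (- - a)), <- (nr_addNr N a), nr_addA, nr_addNr, nr_add0r; reflexivity. Qed.
Lemma opp_add (a b : N) : - (a + b) = - b + - a.
Proof.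
  assert (H : (a + b) + (- b + - a) = 0).
  { rewrite addA', addKl, nr_addrN. reflexivity. }
  rewrite <- (nr_addr0 N (- (a + b))), <- H, nr_addA, nr_addNr, nr_add0r. reflexivity.
Qed.
Lemma opp0 : - 0 = 0.
Proof. rewrite <- (nr_add0r N (- 0)), nr_addrN. reflexivity. Qed.
End G.

Ltac grp := unfold tern; repeat (rewrite ?opp_add, ?oppK, ?opp0, ?addA', ?addKl, ?addNKl,
   ?nr_add0r, ?nr_addr0, ?nr_addrN, ?nr_addNr); reflexivity.

Theorem corollary3p15 (N : nearRing) (P : N -> Prop) :
  (exists R : N -> N -> Prop, congruence R /\ is_class_of R P) <-> paragon P.
Proof.
  split.
  - intros [R [[Rr [Rs [Rt [Ra Rm]]]] [a Ha]]].
    assert (Ro : forall x y, R x y -> R (nr_opp N x) (nr_opp N y)).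
    { intros x y H.
      assert (E1 : nr_opp N x = nr_add N (nr_add N (nr_opp N x) y) (nr_opp N y)) by grp.
      assert (E2 : nr_opp N y = nr_add N (nr_add N (nr_opp N x) x) (nr_opp N y)) by grp.
      pose proof (Ra _ _ _ _ (Ra _ _ _ _ (Rr (nr_opp N x)) (Rs _ _ H)) (Rr (nr_opp N y))) as H'.
      rewrite <- E1, <- E2 in H'. exact H'. }
    assert (Rc : forall x y x' y', x = x' -> y = y' -> R x' y' -> R x y)
      by (intros; subst; auto).
    assert (Rtern : forall x x' y y' z z', R x x' -> R y y' -> R z z' ->
                    R (tern x y z) (tern x' y' z')).
    { intros; unfold tern; apply Ra; [apply Ra; [|apply Ro]|]; assumption. }
    assert (HR : forall b c, heap_rel P b c <-> R b c).
    { intros b c; split.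
      - intros [s [Hs1 Hs2]]. apply Ha in Hs1. apply Ha in Hs2.
        apply (Rc _ _ (tern (tern b c s) s c) (tern a a c)); [grp|grp|].
        apply Rtern; [apply Rs; exact Hs2 | apply Rs; exact Hs1 | apply Rr].
      - intros H. exists a. split; [apply Ha, Rr|]. apply Ha.
        apply (Rc _ _ (tern c c a) (tern b c a)); [grp|grp|].
        apply Rs, Rtern; [exact H | apply Rr | apply Rr]. }
    split; [exists a; apply Ha, Rr|]. split.
    + split; [exists a; apply Ha, Rr|]. split.
      * intros x y z Hx Hy Hz. apply Ha in Hx, Hy, Hz. apply Ha.
        apply (Rc _ _ (tern a a a) (tern x y z)); [grp|grp|]. apply Rtern; assumption.
      * intros x e s He Hs. apply Ha in He, Hs. apply Ha.
        apply (Rc _ _ (tern (tern x a a) x a) (tern (tern x e s) x e)); [grp|grp|].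
        apply Rtern; [apply Rtern| |]; auto.
    + intros b. split.
      * intros x y z Hx Hy Hz. apply HR in Hx, Hy, Hz. apply HR.
        apply (Rc _ _ (tern b b b) (tern x y z)); [grp|grp|]. apply Rtern; assumption.
      * intros s s' t Hs Hs'. apply HR in Hs, Hs'. split; apply HR.
        -- apply (Rc _ _ (tern (nr_mul N t b) (nr_mul N t b) b) (tern (nr_mul N t s') (nr_mul N t s) s)); [grp|grp|].
           apply Rtern; [apply Rm| apply Rm|]; auto.
        -- apply (Rc _ _ (tern (nr_mul N b t) (nr_mul N b t) b) (tern (nr_mul N s' t) (nr_mul N s t) s)); [grp|grp|].
           apply Rtern; [apply Rm| apply Rm|]; auto.
  - intros [[p Hp] [[_ [Hsh Hnorm]] Hcl]].
    assert (HR : forall x y, heap_rel P x y <-> P (tern x y p)).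
    { intros x y; split.
      - intros [s [Hs1 Hs2]].
        assert (E : tern x y p = tern (tern x y s) s p) by grp. rewrite E. auto.
      - intros H; exists p; auto. }
    exists (fun x y => P (tern x y p)).
    assert (Rs : forall x y, P (tern x y p) -> P (tern y x p)).
    { intros x y H. assert (E : tern y x p = tern p (tern x y p) p) by grp.
      rewrite E; auto. }
    assert (Rt : forall x y z, P (tern x y p) -> P (tern y z p) -> P (tern x z p)).
    { intros x y z H1 H2. assert (E : tern x z p = tern (tern x y p) p (tern y z p)) by grp.
      rewrite E; auto. }
    split; [repeat split|].
    + intros x. assert (E : tern x x p = p) by grp. rewrite E; exact Hp.
    + exact Rs.
    + exact Rt.
    + intros a b c d H1 H2.
      pose proof (Hnorm (nr_add N a p) p (tern c d p) Hp H2) as H3.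
      assert (E : tern (nr_add N a c) (nr_add N b d) p =
                  tern (tern (tern (nr_add N a p) p (tern c d p)) (nr_add N a p) p) p (tern a b p)) by grp.
      rewrite E; auto.
    + intros a b c d H1 H2. apply Rt with (nr_mul N a d).
      * destruct (Hcl c) as [_ Hc].
        destruct (Hc c d a) as [Hc1 _].
        { apply HR. assert (E : tern c c p = p) by grp. rewrite E; exact Hp. }
        { apply HR; exact H2. }
        apply HR in Hc1.
        assert (E : tern (nr_mul N a c) (nr_mul N a d) p =
                    tern c (tern (nr_mul N a d) (nr_mul N a c) c) p) by grp.
        rewrite E; exact Hc1.
      * destruct (Hcl a) as [_ Hc].
        destruct (Hc a b d) as [_ Hc1].
        { apply HR. assert (E : tern a a p = p) by grp. rewrite E; exact Hp. }
        { apply HR; exact H1. }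
        apply HR in Hc1.
        assert (E : tern (nr_mul N a d) (nr_mul N b d) p =
                    tern a (tern (nr_mul N b d) (nr_mul N a d) a) p) by grp.
        rewrite E; exact Hc1.
    + exists p. intros x; split.
      * intros H; auto.
      * intros H. assert (E : x = tern p (tern p x p) p) by grp. rewrite E; auto.
Qed.
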